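(* Let $N\in\mathbb{C}^{m\times n}$ have rank $r$ and singular value decomposition $N=U\begin{pmatrix}\Sigma & 0\\ 0 & 0\end{pmatrix}V^{\ast}$, where $\Sigma\in\mathbb{C}^{r\times r}$ is diagonal with positive diagonal entries and $U\in\mathbb{C}^{m\times m}$, $V\in\mathbb{C}^{n\times n}$ are unitary. Let $X\in\mathbb{C}^{m\times m}$ be arbitrary. Suppose that one of the following conditions holds: (C1) $NN^{\ast}X$ is normal; (C2) there exist $0\neq c_{1}\in\mathbb{C}$ and $k_{1}\in\mathbb{N}^{+}$ such that $(NN^{\ast}X)^{k_{1}}=c_{1}NN^{\dagger}$; (C3) there exist $0\neq c_{2}\in\mathbb{C}$, $\ell\in\mathbb{N}^{+}$ and $k_{2}\in\mathbb{N}^{+}$ such that $(NN^{\ast}X)^{k_{2}}=c_{2}(NN^{\ast})^{\ell}$; (C4) $XE_{N}$ is normal; (C5) there exist $0\neq c_{3}\in\mathbb{C}$ and $k_{3}\in\mathbb{N}^{+}$ such that $(XE_{N})^{k_{3}}=c_{3}E_{N}$; (C6) $NN^{\dagger}XE_{N}=0$; (C7) there exists $k_{4}\in\mathbb{N}^{+}$ such that $(NN^{\ast})^{k_{4}}XE_{N}=0$. Then $X=U\begin{pmatrix}X_{1} & 0\\ X_{2} & X_{4}\end{pmatrix}U^{\ast}$ for some $X_{1}\in\mathbb{C}^{r\times r}$, $X_{2}\in\mathbb{C}^{(m-r)\times r}$, $X_{4}\in\mathbb{C}^{(m-r)\times(m-r)}$.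
   Context: $\mathbb{N}^{+}$ is the set of positive integers. For a complex matrix $A$, $A^{\ast}$ is its conjugate transpose, $A^{\dagger}$ its Moore--Penrose inverse, and $E_{A}:=I-AA^{\dagger}$. A square matrix $B$ is normal if $BB^{\ast}=B^{\ast}B$. *)

(* Defs.v *)
From mathcomp Require Import all_boot all_order all_algebra.
From mathcomp Require Import sesquilinear spectral.
From mathcomp Require Import complex.
From mathcomp Require Import Rstruct.
Set Implicit Arguments. Unset Strict Implicit. Unset Printing Implicit Defensive.
Import Order.TTheory GRing.Theory Num.Theory.
Local Open Scope ring_scope.
Local Open Scope sesquilinear_scope.

Definition C : numClosedFieldType := (Rdefinitions.R)[i]%C.

(* G is the Moore--Penrose inverse of A, i.e. G satisfies the four Penrose
   equations (such a G exists and is unique, so this pins down A^dagger). *)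
Definition is_MP_inverse (m n : nat) (A : 'M[C]_(m, n)) (G : 'M[C]_(n, m)) : Prop :=
  [/\ A *m G *m A = A, G *m A *m G = G,
      (A *m G) ^t* = A *m G & (G *m A) ^t* = G *m A].

(* Main.v *)
Require Import Defs.
From mathcomp Require Import all_boot all_order all_algebra.
From mathcomp Require Import sesquilinear spectral.
From mathcomp Require Import complex.
From mathcomp Require Import Rstruct.
Import Order.TTheory GRing.Theory Num.Theory.
Local Open Scope ring_scope.
Local Open Scope sesquilinear_scope.

Lemma ctK m n (A : 'M[C]_(m,n)) : A ^t* ^t* = A.
Proof. exact: trmxCK. Qed.

Lemma ct_mul m n k (A : 'M[C]_(m,n)) (B : 'M[C]_(n,k)) : (A *m B)^t* = B^t* *m A^t*.
Proof. by rewrite trmx_mul map_mxM. Qed.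

Lemma ct0 m n : (0 : 'M[C]_(m,n))^t* = 0.
Proof. by rewrite trmx0 map_mx0. Qed.

Lemma ct_block m1 m2 n1 n2 (A : 'M[C]_(m1,n1)) (B : 'M[C]_(m1,n2))
  (Cc : 'M[C]_(m2,n1)) (D : 'M[C]_(m2,n2)) :
  (block_mx A B Cc D)^t* = block_mx (A^t*) (Cc^t*) (B^t*) (D^t*).
Proof. by rewrite tr_block_mx map_block_mx. Qed.

Lemma mxCC0 m n (M : 'M[C]_(m,n)) : M *m M^t* = 0 -> M = 0.
Proof.
move=> H; apply/matrixP=> i j; have := congr1 (fun A : 'M[C]_m => A i i) H.
rewrite !mxE => /psumr_eq0P H2.
have : M i j * (M i j)^* = 0.
  have := H2 _ j isT; rewrite !mxE; apply.
  by move=> k _; rewrite !mxE mul_conjC_ge0.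
by move/eqP; rewrite mul_conjC_eq0 => /eqP ->; rewrite ?mxE.
Qed.

Lemma mxCC0' m n (M : 'M[C]_(m,n)) : M^t* *m M = 0 -> M = 0.
Proof.
move=> H; suff: M^t* = 0 by move=> /(congr1 (fun A => A^t*)); rewrite ctK ct0.
by apply: mxCC0; rewrite ctK.
Qed.

Lemma powU n k (A : 'M[C]_n) : A \in unitmx -> A ^+ k \in unitmx.
Proof.
move=> HA; elim: k => [|k IH]; first by rewrite expr0 unitmx1.
by rewrite exprS -mulmxE unitmx_mul HA IH.
Qed.

Lemma pow_unit_prev n k (A M : 'M[C]_n) : A ^+ k.+1 = M -> M \in unitmx ->
  A ^+ k \in unitmx.
Proof.
move=> H HM; have: A ^+ k *m (A *m invmx M) = 1%:M.
  by rewrite mulmxA mulmxE -exprSr H -mulmxE mulmxV.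
by case/mulmx1_unit.
Qed.

Lemma scaleU n (c : C) (A : 'M[C]_n) : c != 0 -> A \in unitmx -> c *: A \in unitmx.
Proof.
move=> c0 HA; rewrite -mul_scalar_mx unitmx_mul HA andbT unitmxE det_scalar.
by rewrite unitfE expf_neq0.
Qed.

Lemma powblk m p k (A : 'M[C]_m) (B : 'M[C]_(m,p)) :
  (block_mx A B 0 0 : 'M_(m+p)) ^+ k.+1 = block_mx (A ^+ k.+1) (A ^+ k *m B) 0 0.
Proof.
elim: k => [|k IH]; first by rewrite !expr1 expr0 mul1mx.
rewrite exprS IH -mulmxE mulmx_block !mulmx0 !mul0mx !addr0.
have E j : A *m A ^+ j = A ^+ j.+1 by rewrite exprS.
by rewrite mulmxA !E.
Qed.

Lemma powblk2 m p k (B : 'M[C]_(m,p)) (D : 'M[C]_p) :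
  (block_mx 0 B 0 D : 'M_(m+p)) ^+ k.+1 = block_mx 0 (B *m D ^+ k) 0 (D ^+ k.+1).
Proof.
elim: k => [|k IH]; first by rewrite !expr1 expr0 mulmx1.
rewrite exprSr IH -mulmxE mulmx_block !mulmx0 !mul0mx !addr0 !add0r.
have E j : D ^+ j *m D = D ^+ j.+1 by rewrite exprSr.
by rewrite -mulmxA !E.
Qed.
Theorem lemma2p2 (r p q : nat)
  (N : 'M[C]_(r + p, r + q)) (Ndag : 'M[C]_(r + q, r + p))
  (U : 'M[C]_(r + p)) (V : 'M[C]_(r + q)) (Sigma : 'M[C]_r)
  (X : 'M[C]_(r + p)) :
  is_MP_inverse N Ndag ->
  \rank N = r ->
  is_diag_mx Sigma ->
  (forall i : 'I_r, 0 < Sigma i i) ->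
  U \is unitarymx -> V \is unitarymx ->
  N = U *m block_mx Sigma 0 0 0 *m V ^t* ->
  let EN := 1%:M - N *m Ndag in
  let NNs := N *m N ^t* in
  ((NNs *m X) \is normalmx \/
      (exists (c1 : C) (k1 : nat), [/\ c1 != 0, (0 < k1)%N &
          (NNs *m X) ^+ k1 = c1 *: (N *m Ndag)]) \/
      (exists (c2 : C) (l k2 : nat), [/\ c2 != 0, (0 < l)%N, (0 < k2)%N &
          (NNs *m X) ^+ k2 = c2 *: NNs ^+ l]) \/
      (X *m EN) \is normalmx \/
      (exists (c3 : C) (k3 : nat), [/\ c3 != 0, (0 < k3)%N &
          (X *m EN) ^+ k3 = c3 *: EN]) \/
      N *m Ndag *m X *m EN = 0 \/
      (exists k4 : nat, (0 < k4)%N /\ NNs ^+ k4 *m X *m EN = 0)) ->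
  exists (X1 : 'M[C]_r) (X2 : 'M[C]_(p, r)) (X4 : 'M[C]_p),
    X = U *m block_mx X1 0 X2 X4 *m U ^t*.
Proof.
move=> [MP1 MP2 MP3 MP4] _ Sdiag Spos Uu Vu HN EN NNs H.
have HU : U *m U^t* = 1%:M by apply/unitarymxP.
have HU' : U^t* *m U = 1%:M by rewrite -[U^t* *m U]mul1mx mulmxA mulmxKtV.
have HV : V *m V^t* = 1%:M by apply/unitarymxP.
have HV' : V^t* *m V = 1%:M by rewrite -[V^t* *m V]mul1mx mulmxA mulmxKtV.
have SU : Sigma \in unitmx.
  case/diag_mxP: Sdiag Spos => d -> Spos.
  rewrite unitmxE det_diag unitfE; apply/prodf_neq0 => i _.
  by have := Spos i; rewrite mxE eqxx mulr1n => /gt_eqF ->.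
pose cj (A : 'M[C]_(r+p)) := U *m A *m U^t*.
have cjM A B : cj A *m cj B = cj (A *m B).
  by rewrite /cj !mulmxA mulmxKtV // mulmxA.
have cjX A k : cj A ^+ k = cj (A ^+ k).
  elim: k => [|k IH]; first by rewrite !expr0 /cj mulmx1 HU.
  by rewrite !exprS -!mulmxE IH cjM.
have cjC A : (cj A)^t* = cj (A^t*) by rewrite /cj !ct_mul ctK mulmxA.
have cjZ c A : c *: cj A = cj (c *: A) by rewrite /cj scalemxAl scalemxAr.
have cj_inj A B : cj A = cj B -> A = B.
  move=> E; have : U^t* *m cj A *m U = U^t* *m cj B *m U by rewrite E.
  rewrite /cj.
  by rewrite !mulmxA HU' !mul1mx -!mulmxA HU' !mulmx1.
have cj1 : cj 1%:M = 1%:M by rewrite /cj mulmx1 HU.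
have cjB A : 1%:M - cj A = cj (1%:M - A).
  by rewrite /cj mulmxBr mulmxBl mulmx1 HU.
have cj0 : cj 0 = 0 by rewrite /cj mulmx0 mul0mx.
set D := block_mx Sigma 0 0 0 in HN.
pose W := V^t* *m Ndag *m U.
have HNd : Ndag = V *m W *m U^t*.
  by rewrite /W !mulmxA HV mul1mx mulmxtVK.
have HNN : N *m Ndag = cj (D *m W).
  by rewrite HN HNd /cj !mulmxA (mulmxKtV _ Vu).
pose W1 := ulsubmx W; pose W2 := ursubmx W; pose W3 := dlsubmx W; pose W4 := drsubmx W.
have HW : W = block_mx W1 W2 W3 W4 by rewrite submxK.
have HDW : D *m W = block_mx (Sigma *m W1) (Sigma *m W2) 0 0.
  by rewrite HW /D mulmx_block !mul0mx !addr0.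
have E1 : D *m W *m D = D.
  have : U^t* *m (N *m Ndag *m N) *m V = U^t* *m N *m V by rewrite MP1.
  rewrite HNN HN /cj !mulmxA ?HU' ?mul1mx ?(mulmxKtV _ Uu) ?(mulmxKtV _ Vu) //.
have SW1 : Sigma *m W1 = 1%:M.
  move: E1; rewrite HDW {2}/D mulmx_block !mulmx0 !mul0mx !addr0.
  case/eq_block_mx => E _ _ _.
  by rewrite -[Sigma *m W1](mulmxK SU) E mulmxV.
have SW2 : Sigma *m W2 = 0.
  have : cj ((D *m W)^t* ) = cj (D *m W) by rewrite -cjC -HNN MP3.
  move/cj_inj; rewrite HDW ct_block !ct0; case/eq_block_mx => _ _ E _.
  by rewrite -[Sigma *m W2]ctK E ct0.
have HNN' : N *m Ndag = cj (block_mx 1%:M 0 0 0).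
  by rewrite HNN HDW SW1 SW2.
have HEN : EN = cj (block_mx 0 0 0 1%:M).
  rewrite /EN HNN' cjB; congr cj.
  by rewrite [1%:M]scalar_mx_block opp_block_mx add_block_mx !subrr !oppr0 !addr0.
pose Q := Sigma *m Sigma^t*.
have QU : Q \in unitmx by rewrite unitmx_mul SU map_unitmx unitmx_tr.
have HNNs : NNs = cj (block_mx Q 0 0 0).
  rewrite /NNs HN !ct_mul ctK /cj !mulmxA (mulmxKtV _ Vu) //.
  have DD : D *m D^t* = block_mx Q 0 0 0.
    by rewrite /D ct_block !ct0 mulmx_block !mulmx0 !mul0mx !addr0.
  by rewrite -(mulmxA U) DD.
pose Y := U^t* *m X *m U.
have HX : X = cj Y by rewrite /cj /Y !mulmxA HU mul1mx mulmxtVK.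
pose Y1 := ulsubmx Y; pose Y3 := ursubmx Y; pose Y2 := dlsubmx Y; pose Y4 := drsubmx Y.
have HY : Y = block_mx Y1 Y3 Y2 Y4 by rewrite submxK.
suff Y30 : Y3 = 0.
  by exists Y1, Y2, Y4; rewrite HX HY Y30.
have HP : (block_mx Q 0 0 0 : 'M_(r+p)) *m block_mx Y1 Y3 Y2 Y4 = block_mx (Q *m Y1) (Q *m Y3) 0 0.
  by rewrite mulmx_block !mul0mx !addr0.
have HR : block_mx Y1 Y3 Y2 Y4 *m (block_mx 0 0 0 1%:M : 'M_(r+p)) = block_mx 0 Y3 0 Y4.
  by rewrite mulmx_block !mulmx0 !mulmx1 !addr0 !add0r.
have fromQ : Q *m Y3 = 0 -> Y3 = 0.
  by move=> E; rewrite -(mulKmx QU Y3) E mulmx0.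
case: H => [H|[[c [k [c0 k0 H]]]|[[c [l [k [c0 l0 k0 H]]]]|[H|[[c [k [c0 k0 H]]]|[H|[k [k0 H]]]]]]]];
  rewrite ?HEN ?HNNs ?HNN' HX HY ?cjM ?cjX ?cjZ ?cjM ?HP ?HR in H.
- move/normalmxP: H; rewrite cjC !cjM => /cj_inj.
  rewrite ct_block !ct0 !mulmx_block !mulmx0 !mul0mx !addr0 => /eq_block_mx [_ _ _ E].
  by apply: fromQ; apply: mxCC0'; rewrite -E.
- move/cj_inj: H; case: k k0 => // k _.
  rewrite powblk scale_block_mx !scaler0 => /eq_block_mx [F1 F2 _ _].
  have Hu := @pow_unit_prev _ _ _ _ F1 (@scaleU _ _ _ c0 (unitmx1 _ _)).
  by apply: fromQ; rewrite -(mulKmx Hu (Q *m Y3)) F2 mulmx0.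
- move/cj_inj: H; case: k k0 => // k _; case: l l0 => // l _.
  rewrite !powblk mulmx0 scale_block_mx !scaler0 => /eq_block_mx [F1 F2 _ _].
  have Hu := @pow_unit_prev _ _ _ _ F1 (@scaleU _ _ _ c0 (@powU _ _ _ QU)).
  by apply: fromQ; rewrite -(mulKmx Hu (Q *m Y3)) F2 mulmx0.
- move/normalmxP: H; rewrite cjC !cjM => /cj_inj.
  rewrite ct_block !ct0 !mulmx_block !mulmx0 !mul0mx !addr0 !add0r => /eq_block_mx [E _ _ _].
  exact: mxCC0.
- move/cj_inj: H; case: k k0 => // k _.
  rewrite powblk2 scale_block_mx !scaler0 => /eq_block_mx [_ E2 _ E4].
  have Hu := @pow_unit_prev _ _ _ _ E4 (@scaleU _ _ _ c0 (unitmx1 _ _)).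
  by rewrite -(mulmxK Hu Y3) E2 mul0mx.
- rewrite -cj0 in H; move/cj_inj: H.
  rewrite !mulmx_block !mulmx0 !mul0mx !mulmx1 !mul1mx !addr0 !add0r => H.
  by move: H; rewrite -[X in _ = X]block_mx0 => /eq_block_mx [].
- rewrite -cj0 in H; move/cj_inj: H.
  case: k k0 => // k _; rewrite powblk mulmx0.
  rewrite !mulmx_block !mulmx0 !mul0mx !mulmx1 !addr0 !add0r => H.
  move: H; rewrite -[X in _ = X]block_mx0 => /eq_block_mx [_ E _ _].
  by rewrite -(mulKmx (@powU _ k.+1 _ QU) Y3) E mulmx0.
Qed.
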